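(* Let $N\ge 2$, let $T_N$ be the homogeneous tree in which every vertex has degree $N$, and fix a root $o$. Let $m>1$ and $(p,q)\in G_1=\{(p,q): p\ge0,\ m-1-p<q<m\}$. Then for every $\epsilon>0$ there exists a weight $\mu$ on $T_N$ such that $$W_o(n)\asymp n^{\frac{mp+q}{p+q-m+1}}(\ln n)^{\frac{m-1}{p+q-m+1}+\epsilon}\quad\text{for } n\ge 2,$$ and the inequality $\Delta_m u+u^p|\nabla u|^q\le 0$ on $T_N$ admits a nontrivial positive solution.
   Context: A weight on a graph $(V,E)$ is a symmetric function $\mu:V\times V\to[0,\infty)$ with $\mu_{xy}=\mu_{yx}>0$ if and only if $x\sim y$ (adjacent); $\mu(x)=\sum_{y\sim x}\mu_{xy}$. For $m>1$, $\Delta_m u(x)=\frac{1}{\mu(x)}\sum_{y\sim x}\mu_{xy}|u(y)-u(x)|^{m-2}(u(y)-u(x))$ and $|\nabla u(x)|=\big(\sum_{y\sim x}\frac{\mu_{xy}}{2\mu(x)}(u(y)-u(x))^2\big)^{1/2}$. $d$ is the graph distance, $B(o,n)=\{x: d(o,x)\le n\}$, $W_o(n)=\sum_{x\in B(o,n),\,y\in V,\,d(o,x)<d(o,y)}\mu_{xy}$. $f(n)\asymp g(n)$ for $n\ge2$ means there are constants $c,C>0$ with $c\,g(n)\le f(n)\le C\,g(n)$ for all $n\ge 2$. A nontrivial positive solution is a non-constant $u:V\to(0,\infty)$ with $\Delta_m u(x)+u(x)^p|\nabla u(x)|^q\le0$ for all $x\in V$. *)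

(* Defs.v *)
From Stdlib Require Import Reals Lra List Arith.
Import ListNotations.
Open Scope R_scope.

(* Vertices are reduced words: a list [a_k; ...; a_1] (most recent letter first)
   with a_1 < N and a_j < N-1 for j >= 2.  The children of x are i :: x,
   with i < N if x is the root and i < N-1 otherwise; the parent of i :: x is x.
   Thus the root has degree N and every other vertex has degree N. *)
Fixpoint validb (N : nat) (s : list nat) : bool :=
  match s with
  | [] => true
  | [a] => Nat.ltb a N
  | a :: ((_ :: _) as t) => Nat.ltb a (N - 1) && validb N t
  end.

Definition vertex (N : nat) (x : list nat) : Prop := validb N x = true.

Definition root : list nat := [].

Definition nchild (N : nat) (x : list nat) : nat :=
  match x with [] => N | _ => (N - 1)%nat end.

Definition children (N : nat) (x : list nat) : list (list nat) :=
  map (fun i => i :: x) (seq 0 (nchild N x)).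

Definition nbrs (N : nat) (x : list nat) : list (list nat) :=
  match x with
  | [] => children N x
  | _ :: t => t :: children N x
  end.

Definition adj (N : nat) (x y : list nat) : Prop :=
  vertex N x /\ vertex N y /\
  ((exists i, y = i :: x) \/ (exists i, x = i :: y)).

Definition dist_o (x : list nat) : nat := length x.

Fixpoint words (N k : nat) : list (list nat) :=
  match k with
  | O => [[]]
  | S k' => flat_map (fun w => map (fun i => i :: w) (seq 0 N)) (words N k')
  end.

(* the ball B(o,n) (each vertex listed exactly once) *)
Definition ball (N n : nat) : list (list nat) :=
  flat_map (fun k => filter (validb N) (words N k)) (seq 0 (S n)).

Definition lsum {A : Type} (f : A -> R) (l : list A) : R :=
  fold_right (fun a acc => f a + acc) 0 l.

Definition is_weight (N : nat) (mu : list nat -> list nat -> R) : Prop :=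
  forall x y, vertex N x -> vertex N y ->
    mu x y = mu y x /\ 0 <= mu x y /\ (0 < mu x y <-> adj N x y).

Definition muv (N : nat) (mu : list nat -> list nat -> R) (x : list nat) : R :=
  lsum (fun y => mu x y) (nbrs N x).

(* W_o(n) = sum_{x in B(o,n), y in V, d(o,x) < d(o,y)} mu_xy;
   only neighbours y of x contribute since mu_xy = 0 otherwise. *)
Definition W (N : nat) (mu : list nat -> list nat -> R) (n : nat) : R :=
  lsum (fun x => lsum (fun y => if Nat.ltb (dist_o x) (dist_o y) then mu x y else 0)
                      (nbrs N x))
       (ball N n).

Definition phim (m t : R) : R :=
  if Req_EM_T t 0 then 0 else Rpower (Rabs t) (m - 2) * t.

Definition mlap (N : nat) (mu : list nat -> list nat -> R) (m : R)
    (u : list nat -> R) (x : list nat) : R :=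
  / muv N mu x * lsum (fun y => mu x y * phim m (u y - u x)) (nbrs N x).

Definition gradn (N : nat) (mu : list nat -> list nat -> R)
    (u : list nat -> R) (x : list nat) : R :=
  sqrt (lsum (fun y => mu x y / (2 * muv N mu x) * (u y - u x) ^ 2) (nbrs N x)).

(* g^q for g >= 0, with 0^0 = 1 and 0^q = 0 for q > 0
   (for q < 0 and g = 0 the value is +oo, handled in supersol_at) *)
Definition gpow (g q : R) : R :=
  if Req_EM_T g 0 then (if Req_EM_T q 0 then 1 else 0) else Rpower g q.

(* Delta_m u(x) + u(x)^p |grad u(x)|^q <= 0 at x (u(x) > 0 assumed);
   if |grad u(x)| = 0 and q < 0 the left side is +oo, so the inequality fails. *)
Definition supersol_at (N : nat) (mu : list nat -> list nat -> R) (m p q : R)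
    (u : list nat -> R) (x : list nat) : Prop :=
  (gradn N mu u x = 0 -> 0 <= q) /\
  mlap N mu m u x + Rpower (u x) p * gpow (gradn N mu u x) q <= 0.

Definition nontrivial_pos_solution (N : nat) (mu : list nat -> list nat -> R)
    (m p q : R) (u : list nat -> R) : Prop :=
  (forall x, vertex N x -> 0 < u x) /\
  (exists x y, vertex N x /\ vertex N y /\ u x <> u y) /\
  (forall x, vertex N x -> supersol_at N mu m p q u x).

Definition asymp (f g : nat -> R) : Prop :=
  exists c C, 0 < c /\ 0 < C /\
    forall n : nat, (2 <= n)%nat -> c * g n <= f n /\ f n <= C * g n.

(* Main.v *)
Require Import Defs.
From Stdlib Require Import Reals Lra Lia List Arith Bool.
Import ListNotations.
Open Scope R_scope.


Lemma ln_le' x y : 0 < x -> x <= y -> ln x <= ln y.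
Proof. intros Hx Hxy. destruct (Rle_lt_or_eq_dec _ _ Hxy) as [H|H].
 - left; apply ln_increasing; lra. - subst; lra. Qed.

Lemma exp_le' x y : x <= y -> exp x <= exp y.
Proof. intros Hxy. destruct (Rle_lt_or_eq_dec _ _ Hxy) as [H|H].
 - left; apply exp_increasing; lra. - subst; lra. Qed.

Lemma Rpower_pos x y : 0 < Rpower x y.
Proof. unfold Rpower; apply exp_pos. Qed.

Lemma ln3_ge1 : 1 <= ln 3.
Proof. rewrite <- (ln_exp 1). apply ln_le'. apply exp_pos. apply exp_le_3. Qed.

Lemma ln_ge1 x : 3 <= x -> 1 <= ln x.
Proof. intros. pose proof ln3_ge1. pose proof (ln_le' 3 x ltac:(lra) H). lra. Qed.

Lemma ln_pos' x : 1 < x -> 0 < ln x.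
Proof. intros. rewrite <- ln_1. apply ln_increasing; lra. Qed.

Lemma Rpower_ratio a b t : 0 < a -> 0 < b -> b / 2 <= a -> a <= 2 * b ->
  Rpower a t <= Rpower 2 (Rabs t) * Rpower b t.
Proof.
  intros Ha Hb H1 H2. unfold Rpower. rewrite <- exp_plus. apply exp_le'.
  assert (E1 : ln a <= ln 2 + ln b).
  { rewrite <- ln_mult by lra. apply ln_le'; lra. }
  assert (E2 : ln b <= ln 2 + ln a).
  { rewrite <- ln_mult by lra. apply ln_le'; lra. }
  destruct (Rle_or_lt 0 t).
  - rewrite Rabs_right by lra. nra.
  - rewrite Rabs_left by lra. nra.
Qed.

Definition Q (s t x : R) : R := Rpower x s * Rpower (ln x) t.

Lemma Q_pos s t x : 0 < Q s t x.
Proof. unfold Q. pose proof (Rpower_pos x s). pose proof (Rpower_pos (ln x) t). nra. Qed.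

Lemma Q_mul s1 t1 s2 t2 x : Q s1 t1 x * Q s2 t2 x = Q (s1 + s2) (t1 + t2) x.
Proof. unfold Q. rewrite !Rpower_plus. ring. Qed.

Lemma Q_pow s t x r : Rpower (Q s t x) r = Q (s * r) (t * r) x.
Proof. unfold Q. rewrite <- Rpower_mult_distr by apply Rpower_pos.
  rewrite !Rpower_mult. reflexivity. Qed.

Lemma Q_inv s t x : / Q s t x = Q (- s) (- t) x.
Proof. unfold Q. rewrite !Rpower_Ropp. rewrite Rinv_mult. reflexivity. Qed.

Definition K (s t : R) := Rpower 2 (Rabs s) * Rpower 2 (Rabs t).

Lemma K_pos s t : 0 < K s t.
Proof. unfold K. pose proof (Rpower_pos 2 (Rabs s)). pose proof (Rpower_pos 2 (Rabs t)). nra. Qed.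

Lemma Q_close s t x y : 2 <= x -> 2 <= y -> y <= x + 1 -> x <= y + 1 ->
  Q s t y <= K s t * Q s t x.
Proof.
  intros Hx Hy H1 H2. unfold Q, K.
  assert (Lx : 0 < ln x) by (apply ln_pos'; lra).
  assert (Ly : 0 < ln y) by (apply ln_pos'; lra).
  assert (A1 : ln y <= 2 * ln x).
  { replace (2 * ln x) with (ln (x * x)) by (rewrite ln_mult; lra).
    apply ln_le'; nra. }
  assert (A2 : ln x <= 2 * ln y).
  { replace (2 * ln y) with (ln (y * y)) by (rewrite ln_mult; lra).
    apply ln_le'; nra. }
  pose proof (Rpower_ratio y x s ltac:(lra) ltac:(lra) ltac:(lra) ltac:(lra)).
  pose proof (Rpower_ratio (ln y) (ln x) t Ly Lx ltac:(lra) ltac:(lra)).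
  pose proof (Rpower_pos y s). pose proof (Rpower_pos (ln y) t).
  pose proof (Rpower_pos x s). pose proof (Rpower_pos (ln x) t).
  pose proof (Rpower_pos 2 (Rabs s)). pose proof (Rpower_pos 2 (Rabs t)).
  apply Rle_trans with ((Rpower 2 (Rabs s) * Rpower x s) * (Rpower 2 (Rabs t) * Rpower (ln x) t)).
  - apply Rmult_le_compat; lra.
  - lra.
Qed.

Lemma Q_deriv s t x : 1 < x ->
  derivable_pt_lim (Q s t) x (Q (s - 1) (t - 1) x * (s * ln x + t)).
Proof.
  intros Hx. unfold Q.
  assert (Lx : 0 < ln x) by (apply ln_pos'; lra).
  replace (Rpower x (s - 1) * Rpower (ln x) (t - 1) * (s * ln x + t)) with
    ((s * Rpower x (s - 1)) * Rpower (ln x) t + Rpower x s * (t * Rpower (ln x) (t - 1) * / x)).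
  - apply (derivable_pt_lim_mult (fun x => Rpower x s) (fun x => Rpower (ln x) t)).
    + apply derivable_pt_lim_power; lra.
    + apply (derivable_pt_lim_comp ln (fun y => Rpower y t)).
      * apply derivable_pt_lim_ln; lra.
      * apply derivable_pt_lim_power; lra.
  - assert (E1 : Rpower x s = Rpower x (s - 1) * x).
    { pattern s at 1; replace s with ((s - 1) + 1) by ring. rewrite Rpower_plus, Rpower_1; lra. }
    assert (E2 : Rpower (ln x) t = Rpower (ln x) (t - 1) * ln x).
    { pattern t at 1; replace t with ((t - 1) + 1) by ring. rewrite Rpower_plus, Rpower_1; lra. }
    rewrite E1, E2. field. lra.
Qed.

Lemma Q_mvt s t a : 2 <= a -> exists xi, a < xi < a + 1 /\
  Q s t (a + 1) - Q s t a = Q (s - 1) (t - 1) xi * (s * ln xi + t).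
Proof.
  intros Ha.
  destruct (MVT_cor2 (Q s t) (fun x => Q (s - 1) (t - 1) x * (s * ln x + t)) a (a + 1))
    as [c [Hc1 Hc2]].
  - lra.
  - intros c Hc. apply Q_deriv. lra.
  - exists c. split. lra. rewrite Hc1. ring.
Qed.

Lemma Q_ln s t x : 1 < x -> Q s (t - 1) x * ln x = Q s t x.
Proof. intros Hx. unfold Q. assert (0 < ln x) by (apply ln_pos'; lra).
  pattern t at 2; replace t with ((t - 1) + 1) by ring. rewrite Rpower_plus, Rpower_1 by lra. ring. Qed.

Lemma Q_le_t s t x : 3 <= x -> Q s (t - 1) x <= Q s t x.
Proof. intros Hx. rewrite <- (Q_ln s t x) by lra. pose proof (ln_ge1 x Hx).
  pose proof (Q_pos s (t-1) x). nra. Qed.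

Lemma dd_bound al be a z : 0 < al -> 0 < be -> 3 <= a -> (z = a \/ z = a + 1) ->
  al / K (-al - 1) (-be) * Q (-al - 1) (-be) z <= Q (-al) (-be) a - Q (-al) (-be) (a + 1) /\
  Q (-al) (-be) a - Q (-al) (-be) (a + 1) <= (al + be) * K (-al - 1) (-be) * Q (-al - 1) (-be) z.
Proof.
  intros Hal Hbe Ha Hz.
  destruct (Q_mvt (-al) (-be) a ltac:(lra)) as [xi [Hxi E]].
  assert (E2 : Q (-al) (-be) a - Q (-al) (-be) (a + 1) =
     al * Q (-al - 1) (-be) xi + be * Q (-al - 1) (-be - 1) xi).
  { rewrite <- (Q_ln (-al - 1) (-be) xi) by lra. lra. }
  rewrite E2.
  pose proof (Q_le_t (-al - 1) (-be) xi ltac:(lra)).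
  assert (C1 : Q (-al - 1) (-be) z <= K (-al - 1) (-be) * Q (-al - 1) (-be) xi)
    by (apply Q_close; lra).
  assert (C2 : Q (-al - 1) (-be) xi <= K (-al - 1) (-be) * Q (-al - 1) (-be) z)
    by (apply Q_close; lra).
  pose proof (K_pos (-al - 1) (-be)).
  pose proof (Q_pos (-al - 1) (-be) xi). pose proof (Q_pos (-al - 1) (-be - 1) xi).
  pose proof (Q_pos (-al - 1) (-be) z).
  split.
  - apply Rle_trans with (al * Q (-al - 1) (-be) xi).
    + unfold Rdiv. rewrite Rmult_assoc. apply Rmult_le_compat_l. lra.
      apply (Rmult_le_reg_l (K (-al - 1) (-be))). lra.
      rewrite <- Rmult_assoc, Rinv_r by lra. lra.
    + nra.
  - apply Rle_trans with ((al + be) * Q (-al - 1) (-be) xi).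
    + nra.
    + rewrite Rmult_assoc. apply Rmult_le_compat_l; lra.
Qed.

Lemma J_bound eps a : 0 < eps -> 3 <= a ->
  eps / K (-1) (eps - 1) * Q (-1) (eps - 1) (a + 1) <= Q 0 eps (a + 1) - Q 0 eps a.
Proof.
  intros He Ha.
  destruct (Q_mvt 0 eps a ltac:(lra)) as [xi [Hxi E]].
  replace (0 - 1) with (-1) in E by ring. rewrite E.
  assert (C1 : Q (-1) (eps - 1) (a + 1) <= K (-1) (eps - 1) * Q (-1) (eps - 1) xi)
    by (apply Q_close; lra).
  pose proof (K_pos (-1) (eps - 1)).
  unfold Rdiv. replace (0 * ln xi + eps) with eps by ring.
  apply (Rmult_le_reg_l (K (-1) (eps - 1))). lra.
  replace (K (-1) (eps - 1) * (eps * / K (-1) (eps - 1) * Q (-1) (eps - 1) (a + 1)))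
    with (eps * Q (-1) (eps - 1) (a + 1)) by (field; lra).
  nra.
Qed.

Lemma Q_mono s t x y : 0 <= s -> 0 <= t -> 3 <= x -> x <= y -> Q s t x <= Q s t y.
Proof.
  intros Hs Ht Hx Hy. unfold Q. pose proof (ln_ge1 x Hx).
  assert (ln x <= ln y) by (apply ln_le'; lra).
  apply Rmult_le_compat.
  - left; apply Rpower_pos. - left; apply Rpower_pos.
  - apply Rle_Rpower_l; lra. - apply Rle_Rpower_l; lra.
Qed.

Definition xk (k : nat) : R := INR k + 3.
Definition gs al be k := Q (-al) (-be) (xk k).
Definition dd al be k := gs al be k - gs al be (S k).
Definition ws m al be eps k := Q 0 eps (xk k) / Rpower (dd al be k) (m - 1).

Lemma xk_S k : xk (S k) = xk k + 1.
Proof. unfold xk. rewrite S_INR. ring. Qed.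
Lemma xk_ge3 k : 3 <= xk k.
Proof. unfold xk. pose proof (pos_INR k). lra. Qed.

Definition P al be x := Q (-al - 1) (-be) x.
Definition cd al be := al / K (-al - 1) (-be).
Definition Cd al be := (al + be) * K (-al - 1) (-be).

Lemma cd_pos al be : 0 < al -> 0 < cd al be.
Proof. intros. unfold cd. pose proof (K_pos (-al-1) (-be)). apply Rdiv_lt_0_compat; lra. Qed.
Lemma Cd_pos al be : 0 < al -> 0 < be -> 0 < Cd al be.
Proof. intros. unfold Cd. pose proof (K_pos (-al-1) (-be)). apply Rmult_lt_0_compat; lra. Qed.

Lemma dd_b0 al be k : 0 < al -> 0 < be ->
  cd al be * P al be (xk k) <= dd al be k <= Cd al be * P al be (xk k).
Proof. intros. unfold dd, gs, cd, Cd, P. rewrite xk_S.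
  apply dd_bound; auto. apply xk_ge3. Qed.

Lemma dd_b1 al be k : 0 < al -> 0 < be ->
  cd al be * P al be (xk (S k)) <= dd al be k <= Cd al be * P al be (xk (S k)).
Proof. intros. unfold dd, gs, cd, Cd, P. rewrite !xk_S.
  apply dd_bound; auto. apply xk_ge3. Qed.

Lemma dd_pos al be k : 0 < al -> 0 < be -> 0 < dd al be k.
Proof. intros. pose proof (dd_b0 al be k H H0). pose proof (cd_pos al be H).
  pose proof (Q_pos (-al-1) (-be) (xk k)). unfold P in *. nra. Qed.

Lemma Rpower_le_base a b r : 0 <= r -> 0 < a -> a <= b -> Rpower a r <= Rpower b r.
Proof. intros. apply Rle_Rpower_l; lra. Qed.

Lemma frac_upper num N0 d c Pv r : 0 <= r -> 0 < c -> 0 < Pv -> 0 < num -> num <= N0 ->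
  c * Pv <= d -> num / Rpower d r <= (N0 / Rpower Pv r) / Rpower c r.
Proof.
  intros Hr Hc HP Hn HN Hd.
  assert (E : Rpower c r * Rpower Pv r <= Rpower d r).
  { rewrite Rpower_mult_distr by lra. apply Rpower_le_base; nra. }
  pose proof (Rpower_pos c r). pose proof (Rpower_pos Pv r). pose proof (Rpower_pos d r).
  unfold Rdiv. rewrite Rmult_assoc, <- Rinv_mult.
  apply Rmult_le_compat; try lra. left; apply Rinv_0_lt_compat; lra.
  apply Rinv_le_contravar. nra. lra.
Qed.

Lemma frac_lower num N0 d C Pv r : 0 <= r -> 0 < C -> 0 < Pv -> 0 < N0 -> N0 <= num ->
  0 < d -> d <= C * Pv -> (N0 / Rpower Pv r) / Rpower C r <= num / Rpower d r.
Proof.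
  intros Hr Hc HP Hn HN Hd0 Hd.
  assert (E : Rpower d r <= Rpower C r * Rpower Pv r).
  { rewrite Rpower_mult_distr by lra. apply Rpower_le_base; nra. }
  pose proof (Rpower_pos C r). pose proof (Rpower_pos Pv r). pose proof (Rpower_pos d r).
  unfold Rdiv. rewrite Rmult_assoc, <- Rinv_mult.
  apply Rmult_le_compat; try lra. left; apply Rinv_0_lt_compat; nra.
  apply Rinv_le_contravar. lra. nra.
Qed.

Lemma Q_frac al be eps m x :
  Q 0 eps x / Rpower (P al be x) (m - 1) = Q ((al + 1) * (m - 1)) (eps + be * (m - 1)) x.
Proof. unfold Rdiv, P. rewrite Q_pow, Q_inv, Q_mul. f_equal; ring. Qed.

Definition a0 al m := (al + 1) * (m - 1).
Definition B0 be eps m := eps + be * (m - 1).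

Lemma ws_upper m al be eps k : 1 < m -> 0 < al -> 0 < be ->
  ws m al be eps k <= / Rpower (cd al be) (m - 1) * Q (a0 al m) (B0 be eps m) (xk k).
Proof.
  intros. unfold ws. pose proof (dd_b0 al be k H0 H1).
  eapply Rle_trans. apply (frac_upper _ (Q 0 eps (xk k)) _ (cd al be) (P al be (xk k))); try lra.
  apply cd_pos; auto. apply Q_pos. apply Q_pos.
  rewrite Q_frac. unfold a0, B0. right. field. pose proof (Rpower_pos (cd al be) (m-1)). lra.
Qed.

Lemma ws_lower m al be eps k : 1 < m -> 0 < al -> 0 < be ->
  / Rpower (Cd al be) (m - 1) * Q (a0 al m) (B0 be eps m) (xk k) <= ws m al be eps k.
Proof.
  intros. unfold ws. pose proof (dd_b0 al be k H0 H1).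
  eapply Rle_trans. 2: apply (frac_lower _ (Q 0 eps (xk k)) _ (Cd al be) (P al be (xk k))); try lra.
  rewrite Q_frac. unfold a0, B0. right. field. pose proof (Rpower_pos (Cd al be) (m-1)). lra.
  apply Cd_pos; auto. apply Q_pos. apply Q_pos. apply dd_pos; auto.
Qed.

Lemma ws_prev_upper m al be eps l : 1 < m -> 0 < al -> 0 < be ->
  ws m al be eps l <= K 0 eps / Rpower (cd al be) (m - 1) * Q (a0 al m) (B0 be eps m) (xk (S l)).
Proof.
  intros. unfold ws. pose proof (dd_b1 al be l H0 H1).
  assert (Hc : Q 0 eps (xk l) <= K 0 eps * Q 0 eps (xk (S l))).
  { apply Q_close; rewrite ?xk_S; pose proof (xk_ge3 l); lra. }
  eapply Rle_trans. apply (frac_upper _ (K 0 eps * Q 0 eps (xk (S l))) _ (cd al be) (P al be (xk (S l)))); try lra.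
  apply cd_pos; auto. apply Q_pos. apply Q_pos.
  replace (K 0 eps * Q 0 eps (xk (S l)) / Rpower (P al be (xk (S l))) (m - 1)) with (K 0 eps * (Q 0 eps (xk (S l)) / Rpower (P al be (xk (S l))) (m - 1))) by (unfold Rdiv; ring).
  rewrite Q_frac. unfold a0, B0. right. field.
  pose proof (Rpower_pos (cd al be) (m-1)). lra.
Qed.

Lemma rpow_between x a b q : 0 < a -> a <= x -> x <= b -> Rpower x q <= Rpower a q + Rpower b q.
Proof.
  intros Ha H1 H2. unfold Rpower.
  assert (ln a <= ln x) by (apply ln_le'; lra). assert (ln x <= ln b) by (apply ln_le'; lra).
  pose proof (exp_pos (q * ln a)). pose proof (exp_pos (q * ln b)).
  destruct (Rle_or_lt 0 q).
  - assert (exp (q * ln x) <= exp (q * ln b)) by (apply exp_le'; nra). lra.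
  - assert (exp (q * ln x) <= exp (q * ln a)) by (apply exp_le'; nra). lra.
Qed.

Lemma G0_bounds w1 w2 e1 e2 lo hi : 0 < w1 -> 0 < w2 -> 0 < lo ->
  lo <= e1 <= hi -> lo <= e2 <= hi ->
  lo / 2 <= sqrt ((w1 * e1 ^ 2 + w2 * e2 ^ 2) / (2 * (w1 + w2))) <= hi.
Proof.
  intros H1 H2 Hl [E1 E1'] [E2 E2'].
  assert (A1 : w1 * lo ^ 2 <= w1 * e1 ^ 2) by (apply Rmult_le_compat_l; nra).
  assert (A2 : w2 * lo ^ 2 <= w2 * e2 ^ 2) by (apply Rmult_le_compat_l; nra).
  assert (A3 : w1 * e1 ^ 2 <= w1 * hi ^ 2) by (apply Rmult_le_compat_l; nra).
  assert (A4 : w2 * e2 ^ 2 <= w2 * hi ^ 2) by (apply Rmult_le_compat_l; nra).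
  set (X := (w1 * e1 ^ 2 + w2 * e2 ^ 2) / (2 * (w1 + w2))).
  assert (Xl : (lo / 2) ^ 2 <= X).
  { unfold X. apply Rmult_le_reg_r with (2 * (w1 + w2)). lra.
    unfold Rdiv at 2. rewrite Rmult_assoc, Rinv_l by lra. nra. }
  assert (Xu : X <= hi ^ 2).
  { unfold X. apply Rmult_le_reg_r with (2 * (w1 + w2)). lra.
    unfold Rdiv. rewrite Rmult_assoc, Rinv_l by lra. nra. }
  split.
  - rewrite <- (sqrt_pow2 (lo / 2)) by lra. apply sqrt_le_1_alt. lra.
  - rewrite <- (sqrt_pow2 hi) by lra. apply sqrt_le_1_alt. lra.
Qed.

Lemma J_level eps l : 0 < eps ->
  eps / K (-1) (eps - 1) * Q (-1) (eps - 1) (xk (S l)) <= Q 0 eps (xk (S l)) - Q 0 eps (xk l).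
Proof. intros. rewrite xk_S. apply J_bound; auto. apply xk_ge3. Qed.

Definition CR m q al be eps :=
  (K 0 eps + 1) / Rpower (cd al be) (m - 1) * (Rpower (cd al be / 2) q + Rpower (Cd al be) q).

Lemma level_rhs m p q al be eps l : 1 < m -> 0 < al -> 0 < be -> 0 < eps ->
  a0 al m + (-al) * p + (-al - 1) * q = -1 ->
  B0 be eps m + (-be) * p + (-be) * q = eps - 1 ->
  (ws m al be eps l + ws m al be eps (S l)) * Rpower (gs al be (S l)) p *
   Rpower (sqrt ((ws m al be eps l * dd al be l ^ 2 + ws m al be eps (S l) * dd al be (S l) ^ 2)
                 / (2 * (ws m al be eps l + ws m al be eps (S l))))) q
  <= CR m q al be eps * Q (-1) (eps - 1) (xk (S l)).
Proof.
  intros Hm Hal Hbe He H1 H2.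
  set (x := xk (S l)).
  pose proof (dd_b1 al be l Hal Hbe) as D1. pose proof (dd_b0 al be (S l) Hal Hbe) as D2.
  fold x in D1, D2.
  pose proof (cd_pos al be Hal). pose proof (Cd_pos al be Hal Hbe).
  assert (HP : 0 < P al be x) by apply Q_pos.
  assert (W1 : 0 < ws m al be eps l) by (unfold ws; apply Rdiv_lt_0_compat; [apply Q_pos|apply Rpower_pos]).
  assert (W2 : 0 < ws m al be eps (S l)) by (unfold ws; apply Rdiv_lt_0_compat; [apply Q_pos|apply Rpower_pos]).
  pose proof (G0_bounds _ _ _ _ (cd al be * P al be x) (Cd al be * P al be x) W1 W2 ltac:(nra) D1 D2) as G.
  set (G0 := sqrt _) in G |- *.
  assert (HG : Rpower G0 q <= (Rpower (cd al be / 2) q + Rpower (Cd al be) q) * Q ((-al - 1) * q) (-be * q) x).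
  { eapply Rle_trans. apply (rpow_between G0 (cd al be * P al be x / 2) (Cd al be * P al be x)); try lra; nra.
    rewrite <- Q_pow. fold (P al be x).
    replace (cd al be * P al be x / 2) with ((cd al be / 2) * P al be x) by field.
    rewrite <- !Rpower_mult_distr by lra. lra. }
  assert (HW : ws m al be eps l + ws m al be eps (S l) <=
     (K 0 eps + 1) / Rpower (cd al be) (m - 1) * Q (a0 al m) (B0 be eps m) x).
  { pose proof (ws_prev_upper m al be eps l Hm Hal Hbe).
    pose proof (ws_upper m al be eps (S l) Hm Hal Hbe). fold x in H3, H4.
    unfold Rdiv in *. lra. }
  assert (Hg : Rpower (gs al be (S l)) p = Q (-al * p) (-be * p) x) by (unfold gs; rewrite Q_pow; reflexivity).
  rewrite Hg.
  assert (0 <= Rpower G0 q) by (left; apply Rpower_pos).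
  pose proof (Q_pos (-al * p) (-be * p) x).
  apply Rle_trans with (((K 0 eps + 1) / Rpower (cd al be) (m - 1) * Q (a0 al m) (B0 be eps m) x)
     * Q (-al * p) (-be * p) x * ((Rpower (cd al be / 2) q + Rpower (Cd al be) q) * Q ((-al - 1) * q) (-be * q) x)).
  - apply Rmult_le_compat; try lra.
    + apply Rmult_le_pos; lra.
    + apply Rmult_le_compat_r; lra.
  - unfold CR. right.
    transitivity ((K 0 eps + 1) / Rpower (cd al be) (m - 1) * (Rpower (cd al be / 2) q + Rpower (Cd al be) q)
      * (Q (a0 al m) (B0 be eps m) x * Q (-al * p) (-be * p) x * Q ((-al - 1) * q) (-be * q) x)).
    ring.
    rewrite !Q_mul. f_equal. f_equal; lra.
Qed.

Definition childb (x y : list nat) : bool :=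
  match y with [] => false | _ :: t => if list_eq_dec Nat.eq_dec t x then true else false end.

Definition mkmu (c : nat -> R) (x y : list nat) : R :=
  if childb x y then c (length x) else if childb y x then c (length y) else 0.

Lemma childb_spec x y : childb x y = true <-> exists i, y = i :: x.
Proof.
  destruct y as [|b t]; simpl.
  - split; [discriminate | intros [i H]; discriminate].
  - destruct (list_eq_dec Nat.eq_dec t x) as [E|E].
    + subst; split; auto. intros _; exists b; auto.
    + split; [discriminate|]. intros [i H]; inversion H; congruence.
Qed.

Lemma childb_len x y : childb x y = true -> length y = S (length x).
Proof. intros H; apply childb_spec in H as [i ->]; reflexivity. Qed.

Lemma childb_false_len x y : length y <> S (length x) -> childb x y = false.
Proof. intros H. destruct (childb x y) eqn:E; auto. apply childb_len in E; congruence. Qed.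

Lemma mkmu_child c x i : mkmu c x (i :: x) = c (length x).
Proof. unfold mkmu. replace (childb x (i :: x)) with true; auto.
  symmetry; apply childb_spec; eauto. Qed.

Lemma mkmu_parent c a t : mkmu c (a :: t) t = c (length t).
Proof. unfold mkmu. rewrite childb_false_len by (simpl; lia).
  replace (childb t (a :: t)) with true; auto. symmetry; apply childb_spec; eauto. Qed.

Lemma valid_child N x i : vertex N x -> (i < nchild N x)%nat -> vertex N (i :: x).
Proof.
  unfold vertex. intros Hv Hi. destruct x as [|b t]; simpl in *.
  - apply Nat.ltb_lt; auto.
  - rewrite Hv. rewrite andb_true_r. apply Nat.ltb_lt; auto.
Qed.

Lemma valid_tail N a t : vertex N (a :: t) -> vertex N t.
Proof. unfold vertex. destruct t as [|b s]; simpl; auto.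
  intros H; apply andb_prop in H as [_ H]; exact H. Qed.

Lemma mkmu_weight N c : (forall k, 0 < c k) -> is_weight N (mkmu c).
Proof.
  intros Hc x y Hx Hy. unfold mkmu.
  destruct (childb x y) eqn:E1; destruct (childb y x) eqn:E2.
  - apply childb_len in E1; apply childb_len in E2; lia.
  - split; auto. split. left; auto. split; intros _; auto.
    split; auto. split; auto. left. apply childb_spec; auto.
  - split; auto. split. left; auto. split; intros _; auto.
    split; auto. split; auto. right. apply childb_spec; auto.
  - split; auto. split. lra. split. lra.
    intros [_ [_ [H|H]]]; apply childb_spec in H; congruence.
Qed.

Lemma lsum_ext {A} (f g : A -> R) l : (forall a, In a l -> f a = g a) -> lsum f l = lsum g l.
Proof. induction l; simpl; intros H; auto. rewrite H by auto. rewrite IHl; auto. Qed.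

Lemma lsum_map {A B} (f : B -> R) (h : A -> B) l : lsum f (map h l) = lsum (fun a => f (h a)) l.
Proof. induction l; simpl; auto. rewrite IHl; auto. Qed.

Lemma lsum_const {A} (v : R) (l : list A) : lsum (fun _ => v) l = INR (length l) * v.
Proof. induction l; simpl length. simpl. ring. rewrite S_INR. simpl. rewrite IHl. ring. Qed.

Lemma lsum_app {A} (f : A -> R) l1 l2 : lsum f (l1 ++ l2) = lsum f l1 + lsum f l2.
Proof. induction l1; simpl. ring. rewrite IHl1; ring. Qed.

Lemma lsum_flat_map {A B} (f : B -> R) (g : A -> list B) l :
  lsum f (flat_map g l) = lsum (fun a => lsum f (g a)) l.
Proof. induction l; simpl; auto. rewrite lsum_app, IHl; auto. Qed.

Lemma nbrs_sum_node N c (G : nat -> R) (f : list nat -> R) a t :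
  (forall y, f y = mkmu c (a :: t) y * G (length y)) ->
  lsum f (nbrs N (a :: t)) =
    c (length t) * G (length t) + INR (N - 1) * (c (S (length t)) * G (S (S (length t)))).
Proof.
  intros Hf. unfold nbrs, children, nchild. simpl lsum. rewrite Hf, mkmu_parent.
  rewrite lsum_map. f_equal.
  rewrite (lsum_ext _ (fun _ => c (S (length t)) * G (S (S (length t))))).
  - rewrite lsum_const, length_seq. reflexivity.
  - intros i _. rewrite Hf, mkmu_child. simpl. reflexivity.
Qed.

Lemma nbrs_sum_root N c (G : nat -> R) (f : list nat -> R) :
  (forall y, f y = mkmu c [] y * G (length y)) ->
  lsum f (nbrs N []) = INR N * (c 0%nat * G 1%nat).
Proof.
  intros Hf. unfold nbrs, children, nchild. rewrite lsum_map.
  rewrite (lsum_ext _ (fun _ => c 0%nat * G 1%nat)).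
  - rewrite lsum_const, length_seq. reflexivity.
  - intros i _. rewrite Hf, mkmu_child. simpl. reflexivity.
Qed.

Lemma words_len N k w : In w (words N k) -> length w = k.
Proof.
  revert w; induction k; simpl; intros w H.
  - destruct H as [H|[]]; subst; auto.
  - apply in_flat_map in H as [v [Hv Hw]]. apply in_map_iff in Hw as [i [<- _]].
    simpl; rewrite IHk; auto.
Qed.

Lemma count_lt M N : (M <= N)%nat -> length (filter (fun i => Nat.ltb i M) (seq 0 N)) = M.
Proof.
  induction N; intros H.
  - simpl; lia.
  - rewrite seq_S, filter_app, length_app. simpl.
    destruct (Nat.eq_dec M (S N)) as [E|E].
    + subst. rewrite (proj2 (Nat.ltb_lt N (S N))) by lia. simpl.
      assert (length (filter (fun i => Nat.ltb i (S N)) (seq 0 N)) = N).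
      { rewrite (filter_ext_in _ (fun _ => true)). rewrite filter_true, length_seq; auto.
        intros a Ha. apply in_seq in Ha. apply Nat.ltb_lt; lia. }
      lia.
    + rewrite (proj2 (Nat.ltb_ge N M)) by lia. simpl. rewrite IHN by lia. lia.
Qed.

Definition cnt (N k : nat) : nat := length (filter (validb N) (words N k)).

Lemma cnt_0 N : cnt N 0 = 1%nat.
Proof. reflexivity. Qed.

Lemma cnt_1 N : cnt N 1 = N.
Proof. unfold cnt; simpl. rewrite app_nil_r.
  rewrite (filter_ext_in _ (fun _ => true)).
  - rewrite filter_true, length_map, length_seq; auto.
  - intros a Ha. apply in_map_iff in Ha as [i [<- Hi]]. apply in_seq in Hi.
    simpl. apply Nat.ltb_lt; lia.
Qed.

Lemma filter_map' {A B} (f : B -> bool) (g : A -> B) l :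
  filter f (map g l) = map g (filter (fun a => f (g a)) l).
Proof. induction l; simpl; auto. destruct (f (g a)); simpl; rewrite IHl; auto. Qed.

Lemma cnt_gen N (l : list (list nat)) : (forall w, In w l -> w <> []) -> (1 <= N)%nat ->
  length (filter (validb N) (flat_map (fun w => map (fun i => i :: w) (seq 0 N)) l))
  = ((N - 1) * length (filter (validb N) l))%nat.
Proof.
  intros Hne HN. induction l as [|w l IH]; [simpl; lia|].
  simpl flat_map. rewrite filter_app, length_app, IH by (intros; apply Hne; simpl; auto).
  rewrite filter_map', length_map.
  destruct w as [|b t]. { exfalso; apply (Hne []); simpl; auto. }
  change (filter (validb N) ((b :: t) :: l)) with
    (if validb N (b :: t) then (b :: t) :: filter (validb N) l else filter (validb N) l).
  destruct (validb N (b :: t)) eqn:E.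
  - rewrite (filter_ext (fun x => validb N (x :: b :: t)) (fun i => Nat.ltb i (N - 1))).
    + rewrite count_lt by lia. simpl length. rewrite Nat.mul_succ_r. lia.
    + intros i. change (validb N (i :: b :: t)) with (Nat.ltb i (N - 1) && validb N (b :: t)).
      rewrite E, andb_true_r. reflexivity.
  - rewrite (filter_ext (fun x => validb N (x :: b :: t)) (fun i => false)).
    + rewrite filter_false. simpl. lia.
    + intros i. change (validb N (i :: b :: t)) with (Nat.ltb i (N - 1) && validb N (b :: t)).
      rewrite E, andb_false_r. reflexivity.
Qed.

Lemma cnt_S N k : (1 <= N)%nat -> (1 <= k)%nat -> cnt N (S k) = ((N - 1) * cnt N k)%nat.
Proof.
  intros HN Hk. unfold cnt. simpl words. apply cnt_gen; auto.
  intros w Hw E. subst. apply words_len in Hw. simpl in Hw. lia.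
Qed.

Lemma cnt_formula N k : (1 <= N)%nat -> INR (cnt N k) * INR (nchild N (repeat 0%nat k)) = INR N * (INR N - 1) ^ k.
Proof.
  intros HN. assert (E : INR (N - 1) = INR N - 1) by (rewrite minus_INR by lia; simpl; ring).
  destruct k as [|k].
  - rewrite cnt_0. simpl. ring.
  - replace (nchild N (repeat 0%nat (S k))) with (N - 1)%nat by reflexivity.
    induction k.
    + rewrite cnt_1, E. simpl. ring.
    + rewrite cnt_S by lia. rewrite mult_INR, E. rewrite E in IHk.
      transitivity ((INR N - 1) * (INR (cnt N (S k)) * (INR N - 1))). ring.
      rewrite IHk. simpl. ring.
Qed.

Lemma W_inner N c x :
  lsum (fun y => if Nat.ltb (dist_o x) (dist_o y) then mkmu c x y else 0) (nbrs N x)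
  = INR (nchild N x) * c (length x).
Proof.
  destruct x as [|a t].
  - unfold nbrs, children. rewrite lsum_map.
    rewrite (lsum_ext _ (fun _ => c (length (@nil nat)))).
    + rewrite lsum_const, length_seq. reflexivity.
    + intros i _. unfold dist_o. simpl. rewrite mkmu_child. reflexivity.
  - unfold nbrs, children. simpl lsum at 1.
    unfold dist_o at 1 2. simpl length at 1 2.
    rewrite (proj2 (Nat.ltb_ge _ _)) by lia. rewrite lsum_map.
    rewrite (lsum_ext _ (fun _ => c (length (a :: t)))).
    + rewrite lsum_const, length_seq. simpl. ring.
    + intros i _. unfold dist_o. rewrite (proj2 (Nat.ltb_lt _ _)) by (simpl; lia).
      rewrite mkmu_child. reflexivity.
Qed.

Lemma W_formula N c n : (1 <= N)%nat ->
  W N (mkmu c) n = lsum (fun k => INR N * (INR N - 1) ^ k * c k) (seq 0 (S n)).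
Proof.
  intros HN. unfold W, ball. rewrite lsum_flat_map. apply lsum_ext. intros k _.
  rewrite (lsum_ext _ (fun _ => INR (nchild N (repeat 0%nat k)) * c k)).
  - rewrite lsum_const. fold (cnt N k). rewrite <- cnt_formula by auto. ring.
  - intros x Hx. apply filter_In in Hx as [Hx _]. apply words_len in Hx.
    rewrite W_inner. rewrite Hx. f_equal. f_equal.
    destruct x; destruct k; simpl in *; try lia; reflexivity.
Qed.

Lemma phim_pos m t : 0 < t -> phim m t = Rpower t (m - 1).
Proof. intros Ht. unfold phim. destruct (Req_EM_T t 0). lra.
  rewrite Rabs_right by lra. replace (m - 1) with ((m - 2) + 1) by ring.
  rewrite Rpower_plus, Rpower_1 by lra. reflexivity. Qed.

Lemma phim_neg m t : 0 < t -> phim m (- t) = - Rpower t (m - 1).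
Proof. intros Ht. unfold phim. destruct (Req_EM_T (- t) 0). lra.
  rewrite Rabs_left by lra. rewrite Ropp_involutive. replace (m - 1) with ((m - 2) + 1) by ring.
  rewrite Rpower_plus, Rpower_1 by lra. ring. Qed.

Lemma vertex_ok m p q A1 A2 e1 e2 lam g :
  0 <= A1 -> 0 < A2 -> 0 < e1 -> 0 < e2 -> 0 < lam -> 0 < g ->
  Rpower lam (p + q) * ((A1 + A2) * Rpower g p *
     Rpower (sqrt ((A1 * e1 ^ 2 + A2 * e2 ^ 2) / (2 * (A1 + A2)))) q)
   <= Rpower lam (m - 1) * (A2 * Rpower e2 (m - 1) - A1 * Rpower e1 (m - 1)) ->
  (sqrt (A1 * (/ (2 * (A1 + A2)) * (lam * e1) ^ 2) + A2 * (/ (2 * (A1 + A2)) * (lam * e2) ^ 2)) = 0 -> 0 <= q) /\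
  / (A1 + A2) * (A1 * phim m (lam * e1) + A2 * phim m (- (lam * e2))) +
    Rpower (lam * g) p * gpow (sqrt (A1 * (/ (2 * (A1 + A2)) * (lam * e1) ^ 2) + A2 * (/ (2 * (A1 + A2)) * (lam * e2) ^ 2))) q <= 0.
Proof.
  intros HA1 HA2 He1 He2 Hl Hg Hb.
  set (X := (A1 * e1 ^ 2 + A2 * e2 ^ 2) / (2 * (A1 + A2))).
  assert (HX : 0 < X).
  { unfold X. apply Rdiv_lt_0_compat. pose proof (pow2_ge_0 e1). assert (0 < e2 ^ 2) by (apply pow_lt; lra). nra. lra. }
  assert (E : sqrt (A1 * (/ (2 * (A1 + A2)) * (lam * e1) ^ 2) + A2 * (/ (2 * (A1 + A2)) * (lam * e2) ^ 2))
     = lam * sqrt X).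
  { replace (A1 * (/ (2 * (A1 + A2)) * (lam * e1) ^ 2) + A2 * (/ (2 * (A1 + A2)) * (lam * e2) ^ 2))
      with (lam ^ 2 * X) by (unfold X; field; lra).
    rewrite sqrt_mult by (try apply pow2_ge_0; lra). rewrite sqrt_pow2 by lra. reflexivity. }
  rewrite E. assert (HsX : 0 < sqrt X) by (apply sqrt_lt_R0; lra).
  split. { intros H0. nra. }
  unfold gpow. destruct (Req_EM_T (lam * sqrt X) 0). nra.
  rewrite phim_pos, phim_neg by nra.
  rewrite <- !Rpower_mult_distr by lra.
  rewrite Rpower_plus in Hb. fold X in Hb.
  pose proof (Rpower_pos lam (m - 1)). pose proof (Rpower_pos lam p). pose proof (Rpower_pos lam q).
  pose proof (Rpower_pos g p). pose proof (Rpower_pos (sqrt X) q).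
  pose proof (Rpower_pos e1 (m-1)). pose proof (Rpower_pos e2 (m-1)).
  apply Rmult_le_reg_l with (A1 + A2). lra.
  rewrite Rmult_0_r. rewrite Rmult_plus_distr_l. rewrite <- Rmult_assoc, Rinv_r by lra.
  nra.
Qed.

Lemma vertex_ok' m p q A1 A2 e1 e2 lam g mv S gr :
  0 <= A1 -> 0 < A2 -> 0 < e1 -> 0 < e2 -> 0 < lam -> 0 < g ->
  Rpower lam (p + q) * ((A1 + A2) * Rpower g p *
     Rpower (sqrt ((A1 * e1 ^ 2 + A2 * e2 ^ 2) / (2 * (A1 + A2)))) q)
   <= Rpower lam (m - 1) * (A2 * Rpower e2 (m - 1) - A1 * Rpower e1 (m - 1)) ->
  mv = A1 + A2 ->
  S = A1 * phim m (lam * e1) + A2 * phim m (- (lam * e2)) ->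
  gr = sqrt (A1 * (/ (2 * mv) * (lam * e1) ^ 2) + A2 * (/ (2 * mv) * (lam * e2) ^ 2)) ->
  (gr = 0 -> 0 <= q) /\ / mv * S + Rpower (lam * g) p * gpow gr q <= 0.
Proof. intros. subst mv S gr. apply vertex_ok; auto. Qed.

Lemma lsum_le {T} (f g : T -> R) l : (forall a, In a l -> f a <= g a) -> lsum f l <= lsum g l.
Proof. induction l; simpl; intros H. lra. apply Rplus_le_compat; auto. Qed.

Lemma lsum_nonneg {T} (f : T -> R) l : (forall a, In a l -> 0 <= f a) -> 0 <= lsum f l.
Proof. induction l; simpl; intros H. lra. pose proof (H a (or_introl eq_refl)). pose proof (IHl (fun b Hb => H b (or_intror Hb))). lra. Qed.

Lemma sum_asymp (f : nat -> R) a0 B0 cw Cw :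
  0 <= a0 -> 0 <= B0 -> 0 < cw -> 0 < Cw ->
  (forall k, cw * Q a0 B0 (xk k) <= f k <= Cw * Q a0 B0 (xk k)) ->
  exists c C, 0 < c /\ 0 < C /\ forall n, (2 <= n)%nat ->
    c * Q (a0 + 1) B0 (INR n) <= lsum f (seq 0 (S n)) /\
    lsum f (seq 0 (S n)) <= C * Q (a0 + 1) B0 (INR n).
Proof.
  intros Ha Hb Hc HC Hf.
  exists (cw * / 2 * Rpower (/ 2) a0 * Rpower (/ 2) B0),
         (Cw * 2 * Rpower 3 a0 * Rpower 3 B0).
  pose proof (Rpower_pos (/2) a0). pose proof (Rpower_pos (/2) B0).
  pose proof (Rpower_pos 3 a0). pose proof (Rpower_pos 3 B0).
  split. { repeat apply Rmult_lt_0_compat; lra. }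
  split. { repeat apply Rmult_lt_0_compat; lra. }
  intros n Hn. set (y := INR n).
  assert (Hy : 2 <= y) by (unfold y; replace 2 with (INR 2) by (simpl; lra); apply le_INR; lia).
  assert (Ly : 0 < ln y) by (apply ln_pos'; lra).
  assert (EQ : Q (a0 + 1) B0 y = y * (Rpower y a0 * Rpower (ln y) B0)).
  { unfold Q. rewrite Rpower_plus, Rpower_1 by lra. ring. }
  split.
  - destruct (Nat.Even_or_Odd n) as [[j Hj]|[j Hj]];
    [ assert (Hjn : (2 * j <= n <= 2 * j + 1)%nat) by lia
    | assert (Hjn : (2 * j <= n <= 2 * j + 1)%nat) by lia ];
    clear Hj.
    all: assert (Hj : 2 * INR j <= y <= 2 * INR j + 1) by
      (unfold y; replace (2 * INR j) with (INR (2 * j)) by (rewrite mult_INR; simpl; ring);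
       replace (INR (2 * j) + 1) with (INR (2 * j + 1)) by (rewrite plus_INR; simpl; ring);
       split; apply le_INR; lia).
    all: replace (S n) with (j + (S n - j))%nat by lia; rewrite seq_app, lsum_app.
    all: assert (F0 : 0 <= lsum f (seq 0 j)) by
       (apply lsum_nonneg; intros k _; pose proof (Hf k); pose proof (Q_pos a0 B0 (xk k)); nra).
    all: assert (F1 : INR (S n - j) * (cw * Q a0 B0 (xk j)) <= lsum f (seq (0 + j) (S n - j))) by
       (rewrite <- (length_seq (S n - j) (0 + j)) at 1; rewrite <- lsum_const; apply lsum_le;
        intros k Hk; apply in_seq in Hk; pose proof (Hf k) as [Hf1 _];
        apply Rle_trans with (2 := Hf1); apply Rmult_le_compat_l; [lra|];
        apply Q_mono; auto; [apply xk_ge3|unfold xk; apply Rplus_le_compat_r, le_INR; lia]).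
    all: assert (Ln : INR (S n - j) >= y / 2) by
       (rewrite minus_INR by lia; rewrite S_INR; fold y; lra).
    all: pose proof (pos_INR j).
    all: assert (Q1 : Rpower (/ 2) a0 * Rpower y a0 <= Rpower (xk j) a0) by
       (rewrite Rpower_mult_distr by lra; apply Rpower_le_base; unfold xk; lra).
    all: assert (Q2 : Rpower (/ 2) B0 * Rpower (ln y) B0 <= Rpower (ln (xk j)) B0) by
       (rewrite Rpower_mult_distr by lra; apply Rpower_le_base; [lra|nra|];
        apply Rmult_le_reg_l with 2; [lra|];
        replace (2 * (/ 2 * ln y)) with (ln y) by field;
        replace (2 * ln (xk j)) with (ln (xk j * xk j)) by (rewrite ln_mult by (unfold xk; lra); ring);
        apply ln_le'; unfold xk; nra).
    all: pose proof (Rpower_pos y a0); pose proof (Rpower_pos (ln y) B0).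
    all: rewrite EQ; unfold Q in F1.
    all: assert (QQ : Rpower (/ 2) a0 * Rpower y a0 * (Rpower (/ 2) B0 * Rpower (ln y) B0) <=
                 Rpower (xk j) a0 * Rpower (ln (xk j)) B0) by
           (apply Rmult_le_compat; try lra; apply Rmult_le_pos; lra).
    all: pose proof (Rpower_pos (xk j) a0); pose proof (Rpower_pos (ln (xk j)) B0).
    all: apply Rle_trans with (INR (S n - j) * (cw * (Rpower (xk j) a0 * Rpower (ln (xk j)) B0))); [|lra].
    all: apply Rle_trans with ((y / 2) * (cw * (Rpower (/ 2) a0 * Rpower y a0 * (Rpower (/ 2) B0 * Rpower (ln y) B0)))).
    all: try (right; field).
    all: apply Rmult_le_compat; try lra; try (apply Rmult_le_pos; try lra; repeat apply Rmult_le_pos; lra);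
         apply Rmult_le_compat_l; lra.
  - apply Rle_trans with (lsum (fun _ => Cw * Q a0 B0 (xk n)) (seq 0 (S n))).
    + apply lsum_le. intros k Hk. apply in_seq in Hk. pose proof (Hf k) as [_ Hf2].
      apply Rle_trans with (1 := Hf2). apply Rmult_le_compat_l; [lra|].
      apply Q_mono; auto. apply xk_ge3. unfold xk. apply Rplus_le_compat_r, le_INR; lia.
    + rewrite lsum_const, length_seq. rewrite S_INR. fold y. rewrite EQ. unfold Q, xk. fold y.
      assert (Q1 : Rpower (y + 3) a0 <= Rpower 3 a0 * Rpower y a0) by
        (rewrite Rpower_mult_distr by lra; apply Rpower_le_base; lra).
      assert (Q2 : Rpower (ln (y + 3)) B0 <= Rpower 3 B0 * Rpower (ln y) B0).
      { rewrite Rpower_mult_distr by lra. apply Rpower_le_base; [lra| |].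
        apply ln_pos'; lra.
        replace (3 * ln y) with (ln (y * (y * y))) by (rewrite !ln_mult by nra; ring).
        apply ln_le'; nra. }
      pose proof (Rpower_pos y a0); pose proof (Rpower_pos (ln y) B0).
      pose proof (Rpower_pos (y + 3) a0); pose proof (Rpower_pos (ln (y + 3)) B0).
      apply Rle_trans with ((2 * y) * (Cw * ((Rpower 3 a0 * Rpower y a0) * (Rpower 3 B0 * Rpower (ln y) B0)))).
      * apply Rmult_le_compat; try lra. apply Rmult_le_pos; [lra|]; apply Rmult_le_pos; lra.
        apply Rmult_le_compat_l; [lra|]. apply Rmult_le_compat; lra.
      * right. ring.
Qed.

Theorem mainTheorem8 (N : nat) (HN : (2 <= N)%nat) (m p q : R)
  (Hm : 1 < m) (Hp : 0 <= p) (Hq1 : m - 1 - p < q) (Hq2 : q < m)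
  (eps : R) (Heps : 0 < eps) :
  exists mu : list nat -> list nat -> R,
    is_weight N mu /\
    asymp (W N mu)
      (fun n => Rpower (INR n) ((m * p + q) / (p + q - m + 1)) *
                Rpower (ln (INR n)) ((m - 1) / (p + q - m + 1) + eps)) /\
    exists u : list nat -> R, nontrivial_pos_solution N mu m p q u.
Proof.
  set (Dd := p + q - m + 1).
  assert (HD : 0 < Dd) by (unfold Dd; lra).
  assert (HD' : p + q - m + 1 <> 0) by lra.
  set (al := (m - q) / Dd). set (be := 1 / Dd).
  assert (Hal : 0 < al) by (unfold al; apply Rdiv_lt_0_compat; lra).
  assert (Hbe : 0 < be) by (unfold be; apply Rdiv_lt_0_compat; lra).
  assert (HN1 : 1 <= INR N - 1).
  { assert (2 <= INR N) by (replace 2 with (INR 2) by (simpl; lra); apply le_INR; lia). lra. }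
  assert (HNm1 : INR (N - 1) = INR N - 1) by (rewrite minus_INR by lia; simpl; ring).
  set (w := ws m al be eps).
  assert (Hw : forall k, 0 < w k).
  { intros k. unfold w, ws. apply Rdiv_lt_0_compat; [apply Q_pos|apply Rpower_pos]. }
  assert (HMk : forall k, 0 < INR N * (INR N - 1) ^ k).
  { intros k. apply Rmult_lt_0_compat. lra. apply pow_lt. lra. }
  set (c := fun k => w k / (INR N * (INR N - 1) ^ k)).
  assert (Hc : forall k, 0 < c k).
  { intros k. unfold c. apply Rdiv_lt_0_compat; auto. }
  exists (mkmu c). split; [apply mkmu_weight; auto|]. split.
  -
    assert (Ha0 : 0 <= a0 al m) by (unfold a0; nra).
    assert (Hb0 : 0 <= B0 be eps m) by (unfold B0; nra).
    pose proof (cd_pos al be Hal). pose proof (Cd_pos al be Hal Hbe).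
    destruct (sum_asymp w (a0 al m) (B0 be eps m) (/ Rpower (Cd al be) (m - 1))
                (/ Rpower (cd al be) (m - 1)) Ha0 Hb0) as [c1 [C1 [Hc1 [HC1 Hs]]]].
    + apply Rinv_0_lt_compat, Rpower_pos.
    + apply Rinv_0_lt_compat, Rpower_pos.
    + intros k. split. apply ws_lower; auto. apply ws_upper; auto.
    + exists c1, C1. split; auto. split; auto. intros n Hn.
      rewrite W_formula by lia.
      rewrite (lsum_ext _ w).
      2:{ intros k _. unfold c. pose proof (HMk k). field. split; [apply pow_nonzero|]; lra. }
      replace ((m * p + q) / Dd) with (a0 al m + 1)
        by (unfold a0, al, Dd; field; lra).
      replace ((m - 1) / Dd + eps) with (B0 be eps m)
        by (unfold B0, be, Dd; field; lra).
      apply Hs; auto.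
  - set (cL := eps / K (-1) (eps - 1)).
    set (CRv := CR m q al be eps).
    assert (HcL : 0 < cL) by (unfold cL; apply Rdiv_lt_0_compat; [lra|apply K_pos]).
    assert (HCR : 0 < CRv).
    { unfold CRv, CR. pose proof (K_pos 0 eps). pose proof (Rpower_pos (cd al be) (m - 1)).
      pose proof (Rpower_pos (cd al be / 2) q). pose proof (Rpower_pos (Cd al be) q).
      apply Rmult_lt_0_compat. apply Rdiv_lt_0_compat; lra. lra. }
    set (d0 := dd al be 0).
    assert (Hd0 : 0 < d0) by (apply dd_pos; auto).
    set (r0 := Rpower d0 (m - 1) / (Rpower (gs al be 0) p * Rpower (sqrt (d0 ^ 2 / 2)) q)).
    assert (Hr0 : 0 < r0).
    { unfold r0. apply Rdiv_lt_0_compat. apply Rpower_pos.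
      apply Rmult_lt_0_compat; apply Rpower_pos. }
    set (rho := Rmin (cL / CRv) r0).
    assert (Hrho : 0 < rho) by (unfold rho; apply Rmin_pos; auto; apply Rdiv_lt_0_compat; auto).
    assert (Hrho1 : rho <= cL / CRv) by apply Rmin_l.
    assert (Hrho2 : rho <= r0) by apply Rmin_r.
    set (lam := Rpower rho (/ Dd)).
    assert (Hlam0 : 0 < lam) by apply Rpower_pos.
    assert (Hlam : Rpower lam (p + q) = Rpower lam (m - 1) * rho).
    { replace (p + q) with ((m - 1) + Dd) by (unfold Dd; ring).
      rewrite Rpower_plus. f_equal. unfold lam. rewrite Rpower_mult.
      replace (/ Dd * Dd) with 1 by (field; lra). apply Rpower_1; auto. }
    assert (Hg : forall k, 0 < gs al be k) by (intros; apply Q_pos).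
    exists (fun x => lam * gs al be (length x)).
    split; [|split].
    + intros x _. apply Rmult_lt_0_compat; auto.
    + exists [], [0%nat]. split; [reflexivity|]. split.
      * unfold vertex; simpl. apply Nat.ltb_lt; lia.
      * simpl. intros E. apply Rmult_eq_reg_l in E; [|lra].
        fold d0 in Hd0. unfold d0, dd in Hd0. lra.
    + intros x Hx. destruct x as [|a t].
      *
        unfold supersol_at, mlap, gradn.
        eapply (vertex_ok' m p q 0 (INR N * c 0%nat) 1 d0 lam (gs al be 0)).
        -- lra.
        -- apply Rmult_lt_0_compat; auto. lra.
        -- lra.
        -- auto.
        -- auto.
        -- auto.
        -- set (A2 := INR N * c 0%nat).
           assert (HA2 : 0 < A2) by (unfold A2; apply Rmult_lt_0_compat; auto; lra).
           replace ((0 * 1 ^ 2 + A2 * d0 ^ 2) / (2 * (0 + A2))) with (d0 ^ 2 / 2) by (field; lra).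
           rewrite Hlam.
           set (gp := Rpower (gs al be 0) p). set (Gq := Rpower (sqrt (d0 ^ 2 / 2)) q).
           assert (Hgp : 0 < gp) by apply Rpower_pos. assert (HGq : 0 < Gq) by apply Rpower_pos.
           assert (E : Rpower d0 (m - 1) = r0 * (gp * Gq)) by (unfold r0; fold gp Gq; field; lra).
           rewrite E. pose proof (Rpower_pos lam (m - 1)).
           replace (Rpower lam (m - 1) * rho * ((0 + A2) * gp * Gq)) with ((Rpower lam (m - 1) * A2 * (gp * Gq)) * rho) by ring.
           replace (Rpower lam (m - 1) * (A2 * (r0 * (gp * Gq)) - 0 * Rpower 1 (m - 1))) with ((Rpower lam (m - 1) * A2 * (gp * Gq)) * r0) by ring.
           apply Rmult_le_compat_l; auto. left. apply Rmult_lt_0_compat; apply Rmult_lt_0_compat; assumption.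
        -- unfold muv. rewrite (nbrs_sum_root N c (fun _ => 1)). ring.
           intros y; ring.
        -- rewrite (nbrs_sum_root N c (fun k => phim m (lam * gs al be k - lam * gs al be 0))).
           2:{ intros y; reflexivity. }
           replace (lam * gs al be 1 - lam * gs al be 0) with (- (lam * d0)) by (unfold d0, dd; ring).
           ring.
        -- f_equal.
           rewrite (nbrs_sum_root N c (fun k => / (2 * muv N (mkmu c) []) * (lam * gs al be k - lam * gs al be 0) ^ 2)).
           2:{ intros y; cbv beta; change (length (@nil nat)) with 0%nat; unfold Rdiv; ring. }
           replace (lam * gs al be 1 - lam * gs al be 0) with (- (lam * d0)) by (unfold d0, dd; ring).
           ring.
      *
        set (l := length t).
        unfold supersol_at, mlap, gradn.
        assert (Hdl : 0 < dd al be l) by (apply dd_pos; auto).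
        assert (HdSl : 0 < dd al be (S l)) by (apply dd_pos; auto).
        eapply (vertex_ok' m p q (c l) (INR (N - 1) * c (S l)) (dd al be l) (dd al be (S l)) lam (gs al be (S l))).
        -- left; auto.
        -- apply Rmult_lt_0_compat; auto. lra.
        -- auto.
        -- auto.
        -- auto.
        -- auto.
        -- set (M := INR N * (INR N - 1) ^ l).
           assert (HM : 0 < M) by apply HMk.
           assert (EA1 : c l = w l / M) by reflexivity.
           assert (EA2 : INR (N - 1) * c (S l) = w (S l) / M).
           { unfold c, M. rewrite HNm1. simpl pow. field. split; [apply pow_nonzero|]; lra. }
           rewrite EA1, EA2.
           pose proof (Hw l) as Hw1. pose proof (Hw (S l)) as Hw2.
           replace ((w l / M * dd al be l ^ 2 + w (S l) / M * dd al be (S l) ^ 2) / (2 * (w l / M + w (S l) / M)))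
             with ((w l * dd al be l ^ 2 + w (S l) * dd al be (S l) ^ 2) / (2 * (w l + w (S l))))
             by (field; lra).
           assert (J1 : w l * Rpower (dd al be l) (m - 1) = Q 0 eps (xk l)).
           { unfold w, ws. field. pose proof (Rpower_pos (dd al be l) (m - 1)); lra. }
           assert (J2 : w (S l) * Rpower (dd al be (S l)) (m - 1) = Q 0 eps (xk (S l))).
           { unfold w, ws. field. pose proof (Rpower_pos (dd al be (S l)) (m - 1)); lra. }
           assert (R1 : Rpower lam (m - 1) * (w (S l) / M * Rpower (dd al be (S l)) (m - 1) - w l / M * Rpower (dd al be l) (m - 1))
                     = Rpower lam (m - 1) / M * (Q 0 eps (xk (S l)) - Q 0 eps (xk l))).
           { rewrite <- J1, <- J2. field. lra. }
           rewrite R1, Hlam.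
           assert (E1 : a0 al m + (-al) * p + (-al - 1) * q = -1) by (unfold a0, al, Dd; field; lra).
           assert (E2 : B0 be eps m + (-be) * p + (-be) * q = eps - 1) by (unfold B0, be, Dd; field; lra).
           pose proof (level_rhs m p q al be eps l Hm Hal Hbe Heps E1 E2) as LR. fold w CRv in LR.
           pose proof (J_level eps l Heps) as JL. fold cL in JL.
           set (X := (w l + w (S l)) * Rpower (gs al be (S l)) p *
              Rpower (sqrt ((w l * dd al be l ^ 2 + w (S l) * dd al be (S l) ^ 2) / (2 * (w l + w (S l))))) q) in LR.
           set (Qx := Q (-1) (eps - 1) (xk (S l))) in LR, JL.
           assert (HX : 0 <= X).
           { unfold X. pose proof (Rpower_pos (gs al be (S l)) p).
             pose proof (Rpower_pos (sqrt ((w l * dd al be l ^ 2 + w (S l) * dd al be (S l) ^ 2) / (2 * (w l + w (S l))))) q).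
             apply Rmult_le_pos; [apply Rmult_le_pos|]; lra. }
           assert (HQx : 0 < Qx) by apply Q_pos.
           pose proof (Rpower_pos lam (m - 1)) as HL.
           replace (Rpower lam (m - 1) * rho * ((w l / M + w (S l) / M) * Rpower (gs al be (S l)) p *
              Rpower (sqrt ((w l * dd al be l ^ 2 + w (S l) * dd al be (S l) ^ 2) / (2 * (w l + w (S l))))) q))
             with (Rpower lam (m - 1) / M * (rho * X)) by (unfold X; field; lra).
           apply Rmult_le_compat_l. apply Rlt_le, Rdiv_lt_0_compat; lra.
           apply Rle_trans with (rho * (CRv * Qx)). apply Rmult_le_compat_l; lra.
           apply Rle_trans with (cL * Qx); [|lra].
           rewrite <- Rmult_assoc. apply Rmult_le_compat_r. lra.
           apply Rmult_le_reg_r with (/ CRv). apply Rinv_0_lt_compat; lra.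
           rewrite Rmult_assoc, Rinv_r, Rmult_1_r by lra. exact Hrho1.
        -- unfold muv. rewrite (nbrs_sum_node N c (fun _ => 1)). fold l. ring.
           intros y; ring.
        -- rewrite (nbrs_sum_node N c (fun k => phim m (lam * gs al be k - lam * gs al be (S l)))).
           2:{ intros y; reflexivity. }
           fold l.
           replace (lam * gs al be l - lam * gs al be (S l)) with (lam * dd al be l) by (unfold dd; ring).
           replace (lam * gs al be (S (S l)) - lam * gs al be (S l)) with (- (lam * dd al be (S l))) by (unfold dd; ring).
           ring.
        -- f_equal.
           rewrite (nbrs_sum_node N c (fun k => / (2 * muv N (mkmu c) (a :: t)) * (lam * gs al be k - lam * gs al be (S l)) ^ 2)).
           2:{ intros y; cbv beta; change (length (a :: t)) with (S l); unfold Rdiv; ring. }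
           fold l.
           replace (lam * gs al be l - lam * gs al be (S l)) with (lam * dd al be l) by (unfold dd; ring).
           replace (lam * gs al be (S (S l)) - lam * gs al be (S l)) with (- (lam * dd al be (S l))) by (unfold dd; ring).
           ring.
Qed.
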